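(* There is an infinite family of instances (temporal graphs $\mathcal G_n$ with parameters $T_{\max}$ and $\delta$ depending on $n$) such that, for every $k$, the witness complexity of $\mathcal G_n$ grows in $\Omega(|E(\mathcal G_n)|)$, with the implied constant independent of $k$.
   Context: A temporal graph $\mathcal G=(V,E,\lambda)$ with lifetime $T_{\max}$ consists of a finite undirected static graph $(V,E)$ and a labeling $\lambda:E\to\{1,\dots,T_{\max}\}$; edge $e$ is present only at time $\lambda(e)$. Infection model with parameter $\delta\in\mathbb N^+$: a set $S\subseteq V\times[0,T_{\max}]$ of at most $k$ seed infections is given; a seed $(u,t)$ makes $u$ infected at time $t$; otherwise a susceptible node $u$ becomes infected at time $t$ iff some neighbour $v$ infectious at time $t$ has $\lambda(uv)=t$ (exactly one infector recorded if several exist). A node infected at time $t$ is infectious at times $t+1,\dots,t+\delta$ and resistant afterwards. The infection log records triples $(u,v,t)$ ($u$ infected $v$ at time $t$; seeds as $(u,u,t)$); a log is consistent if produced by some infection chain. A witnessing schedule of length $a$ for $\mathcal G$ is a sequence $S_1,\dots,S_a$ of seed infection sets (each of size at most $k$) such that after performing these $a$ rounds, all edge labels of $\mathcal G$ are uniquely determined (among labelings of the known static graph $(V,E)$) by the infection logs of these rounds. The witness complexity of $\mathcal G$ is the length of a shortest witnessing schedule. *)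

(* Defs.v *)
From mathcomp Require Import all_boot.
Unset Printing Implicit Defensive.

(* A temporal graph: finite vertex type, static simple graph given by a
   symmetric irreflexive relation, lifetime Tmax, infectious period delta,
   and a labeling on 2-element vertex sets (edges). *)
Record tgraph := TGraph {
  tV : finType;
  tE : rel tV;
  tTmax : nat;
  tdelta : nat;
  tlam : {set tV} -> nat
}.

Definition edges {V : finType} (e : rel V) : {set {set V}} :=
  [set A : {set V} | [exists u, exists v, e u v && (A == [set u; v])]].

Definition valid_labeling {V : finType} (e : rel V) (Tmax : nat)
  (lam : {set V} -> nat) : Prop :=
  forall A, A \in edges (V:=V) e -> 1 <= lam A <= Tmax.

Definition valid_tgraph (G : tgraph) : Prop :=
  symmetric (tE G) /\ irreflexive (tE G) /\ 0 < tdelta G /\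
  valid_labeling (V:=tV G) (tE G) (tTmax G) (tlam G).

Notation seedset G := {set tV G * 'I_(tTmax G).+1} (only parsing).

(* a log: for each node, None (never infected) or Some (x, t):
   x infected it at time t (x = the node itself for a seed) *)
Definition ilog (V : finType) := V -> option (V * nat).

Section Infection.
Variables (V : finType) (e : rel V) (Tmax delta : nat).
Variables (lam : {set V} -> nat) (S : {set V * 'I_Tmax.+1}) (L : ilog V).

Definition seeded (u : V) (t : nat) : Prop :=
  exists s : 'I_Tmax.+1, (u, s) \in S /\ nat_of_ord s = t.

Definition infectious (v : V) (t : nat) : Prop :=
  exists x t0, L v = Some (x, t0) /\ t0 < t <= t0 + delta.

Definition reason (u : V) (t : nat) : Prop :=
  seeded u t \/ exists v, e u v /\ lam [set u; v] = t /\ infectious v t.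

(* L is an infection log produced by the process on labeling lam with
   seeds S: every node is infected at the first time it has a cause,
   with one (arbitrary) valid infector recorded. *)
Definition produces : Prop :=
  forall u, match L u with
  | Some (x, t) =>
      ((x = u /\ seeded u t) \/
       (x <> u /\ e u x /\ lam [set u; x] = t /\ infectious x t)) /\
      (forall t', t' < t -> ~ reason u t')
  | None => forall t, ~ reason u t
  end.
End Infection.
Arguments seeded {V Tmax}. Arguments infectious {V} delta L v t. Arguments reason {V} e {Tmax} delta lam S L u t. Arguments produces {V} e {Tmax} delta lam S L.

Definition witnessing (G : tgraph) (k : nat) (sched : seq (seedset G)) : Prop :=
  (forall S, S \in sched -> #|S| <= k) /\
  forall logs : seq (ilog (tV G)), size logs = size sched ->
    (forall i, i < size sched ->
       produces (tE G) (tdelta G) (tlam G) (nth set0 sched i)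
                (nth (fun _ => None) logs i)) ->
    forall lam' : {set tV G} -> nat,
      valid_labeling (V:=tV G) (tE G) (tTmax G) lam' ->
      (forall i, i < size sched ->
         produces (tE G) (tdelta G) lam' (nth set0 sched i)
                  (nth (fun _ => None) logs i)) ->
      forall A, A \in edges (V:=tV G) (tE G) -> lam' A = tlam G A.

Definition witness_complexity (G : tgraph) (k m : nat) : Prop :=
  (exists sched, witnessing G k sched /\ size sched = m) /\
  (forall sched, witnessing G k sched -> m <= size sched).

(* Main.v *)
Require Import Defs.
From mathcomp Require Import all_boot zify.
From Stdlib Require Import Classical.
Set Implicit Arguments. Unset Strict Implicit.
Module Gen.
Section Gen.
Variables (V : finType) (e : rel V) (Tmax delta : nat) (lam : {set V} -> nat)
  (S : {set V * 'I_Tmax.+1}).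
Hypothesis e_irr : irreflexive e.
Hypothesis lam_ok : forall u v, e u v -> lam [set u; v] <= Tmax.

Definition sdb (u : V) (t : nat) : bool :=
  [exists s : 'I_Tmax.+1, ((u, s) \in S) && (nat_of_ord s == t)].

Lemma sdbP u t : reflect (seeded S u t) (sdb u t).
Proof.
apply: (iffP existsP) => [[s /andP [H /eqP E]]|[s [H E]]]; exists s; first by [].
by rewrite H E eqxx.
Qed.

Definition infb (L : ilog V) v t : bool :=
  if L v is Some (_, t0) then (t0 < t <= t0 + delta) else false.

Lemma infbP L v t : reflect (infectious delta L v t) (infb L v t).
Proof.
rewrite /infb /infectious; case E: (L v) => [[x t0]|].
  apply: (iffP idP) => [H|[y [t1 [[_ <-] H]]]]; last by [].
  by exists x, t0.
by constructor => [[y [t1 [H _]]]].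
Qed.

Definition step (L : ilog V) (t : nat) (u : V) : option (V * nat) :=
  if sdb u t then Some (u, t) else
  if [pick v | e u v && (lam [set u; v] == t) && infb L v t] is Some v
  then Some (v, t) else None.

Fixpoint sim (t : nat) : ilog V :=
  match t with
  | 0 => fun _ => None
  | t'.+1 => fun u => if sim t' u is Some p then Some p else step (sim t') t' u
  end.

Lemma step_time L t u x s : step L t u = Some (x, s) -> s = t.
Proof.
rewrite /step; case: (sdb u t); first by case.
by case: pickP => [v _|_] //; case.
Qed.

Lemma sim_lt t u x s : sim t u = Some (x, s) -> s < t.
Proof.
elim: t => [//|t IH] /=.
case E: (sim t u) => [p|].
  by move=> [Ep]; rewrite Ep in E; apply: ltnW; rewrite ltnS; apply: IH.
by move/step_time => ->.
Qed.

Lemma sim_mono s t u p : s <= t -> sim s u = Some p -> sim t u = Some p.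
Proof.
move/subnK => <-; elim: (t - s) => [//|d IH] H /=.
by rewrite (IH H).
Qed.

Lemma sim_birth t u x s : sim t u = Some (x, s) ->
  sim s u = None /\ step (sim s) s u = Some (x, s).
Proof.
elim: t => [//|t IH] /=.
case E: (sim t u) => [p|]; first by move=> [Ep]; rewrite Ep in E; apply: IH.
by move=> H; have ? := step_time H; subst s.
Qed.

Lemma simL T t u x s : t <= T ->
  (sim t u = Some (x, s) <-> (sim T u = Some (x, s) /\ s < t)).
Proof.
move=> tT; split.
  by move=> H; split; [apply: sim_mono H | apply: sim_lt H].
move=> [H st]; have [B1 B2] := sim_birth H.
apply: (sim_mono (s := s.+1)) => //=.
by rewrite B1.
Qed.

Lemma infb_sim T t v : t <= T -> infb (sim t) v t = infb (sim T) v t.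
Proof.
move=> tT; rewrite /infb.
case E: (sim t v) => [[x t0]|].
  have [F _] := (simL v x t0 tT).1 E.
  by rewrite F.
case F: (sim T v) => [[x t0]|] //.
case H: (t0 < t) => //=.
by have := (simL v x t0 tT).2 (conj F H); rewrite E.
Qed.

Definition LL := sim Tmax.+1.

Lemma reason_step u t : reason e delta lam S LL u t -> t <= Tmax -> sim t.+1 u <> None.
Proof.
move=> R tT /=.
case: (sim t u) => [//|].
rewrite /step.
case: sdbP => [//|NS].
case: pickP => [//|H].
case: R => [//|[v [euv [lv inf]]]].
move/infbP: inf; rewrite -(@infb_sim Tmax.+1 t) ?(leqW tT) // => inf.
by have := H v; rewrite euv lv eqxx inf.
Qed.

Lemma reason_le u t : reason e delta lam S LL u t -> t <= Tmax.
Proof.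
case=> [[s [_ <-]]|[v [euv [<- _]]]]; first by rewrite -ltnS.
exact: lam_ok.
Qed.

Lemma sim_produces : produces e delta lam S LL.
Proof.
move=> u.
case E: (LL u) => [[x t]|].
  have [B1 B2] := sim_birth E.
  have tT : t <= Tmax.+1 by apply: ltnW; apply: sim_lt E.
  split.
    move: B2; rewrite /step.
    case: sdbP => [Hs|_]; first by case=> <-; left; split.
    case: pickP => [v /andP [/andP [euv /eqP lv] inf]|_] //.
    case=> Ev; subst v; right; split.
      by move=> xu; subst x; rewrite e_irr in euv.
    split => //; split => //.
    by apply/infbP; rewrite -(@infb_sim Tmax.+1).
  move=> t' lt R.
  have := reason_step R (reason_le R).
  case F: (sim t'.+1 u) => [p|] // _.
  by rewrite (sim_mono lt F) in B1.
move=> t R.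
have tT := reason_le R.
have := reason_step R tT.
case F: (sim t.+1 u) => [p|] // _.
by rewrite /LL (@sim_mono t.+1 Tmax.+1 _ _ tT F) in E.
Qed.
End Gen.
End Gen.
Import Gen.
Module Star.
Section Transfer.
Variables (V : finType) (e : rel V) (Tmax delta : nat) (S : {set V * 'I_Tmax.+1}).

Lemma produces_transfer (lam lam' : {set V} -> nat) (L : ilog V) :
  produces e delta lam S L ->
  (forall u x t, L u = Some (x, t) -> x <> u -> e u x -> lam [set u; x] = t ->
     infectious delta L x t -> lam' [set u; x] = t) ->
  (forall u v t, e u v -> lam' [set u; v] = t -> infectious delta L v t ->
     lam [set u; v] = t) ->
  produces e delta lam' S L.
Proof.
move=> P H1 H2 u.
have R : forall t, reason e delta lam' S L u t -> reason e delta lam S L u t.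
  move=> t [Hs|[v [euv [lv inf]]]]; first by left.
  by right; exists v; split => //; split => //; apply: H2.
have := P u; case E: (L u) => [[x t]|].
  move=> [C N]; split; last by move=> t' lt /R; apply: N.
  case: C => [C|[xu [eux [lx inf]]]]; first by left.
  right; split => //; split => //; split => //.
  exact: (H1 u x t).
by move=> N t /R; apply: N.
Qed.
End Transfer.

Section Star.
Variable n : nat.
Definition V := 'I_n.+1.
Definition c : V := ord0.
Definition starE : rel V := fun u v => (u == c) (+) (v == c).
Definition lamS (A : {set V}) : nat := \max_(x in A) (nat_of_ord x).

Lemma lamS2 (u v : V) : lamS [set u; v] = maxn u v.
Proof.
rewrite /lamS; case: (eqVneq u v) => [<-|uv].
  by rewrite setUid big_set1 maxnn.
rewrite big_setU1 /= ?big_set1 //.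
by rewrite in_set1.
Qed.

Lemma starE_cases u v : starE u v -> (u = c /\ v != c) \/ (v = c /\ u != c).
Proof.
rewrite /starE; case: eqP => [->|uc]; case: eqP => [->|vc] //= _.
  by left; split => //; apply/eqP.
by right; split => //; apply/eqP.
Qed.

Lemma starE_sym : symmetric starE.
Proof. by move=> u v; rewrite /starE addbC. Qed.

Lemma starE_irr : irreflexive starE.
Proof. by move=> u; rewrite /starE addbb. Qed.

Lemma set2C (T : finType) (a b : T) : [set a; b] = [set b; a].
Proof. by apply/setP => z; rewrite !in_set2 orbC. Qed.

Lemma leaf_pos (v : V) : v != c -> 0 < v.
Proof. by rewrite lt0n; apply: contra => /eqP H; apply/eqP; apply: val_inj. Qed.

Lemma lamS_edge u v : starE u v -> 0 < lamS [set u; v] <= n.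
Proof.
rewrite lamS2 => /starE_cases [[-> vc]|[-> uc]].
  by rewrite /c /= max0n leaf_pos //= -ltnS ltn_ord.
by rewrite /c /= maxn0 leaf_pos //= -ltnS ltn_ord.
Qed.


Lemma inf1 (L : ilog V) v t : infectious 1 L v t ->
  exists y t0, L v = Some (y, t0) /\ t = t0.+1.
Proof.
move=> [y [t0 [E /andP [a b]]]]; exists y, t0; split => //; lia.
Qed.

Lemma seeds1 i u t : seeded [set ((c, inord i) : V * 'I_n.+2)] u t ->
  i < n.+2 -> u = c /\ t = i.
Proof.
move=> [s [Hin Es]] lti.
move: Hin; rewrite in_set1 => /eqP [-> Es'].
by split => //; rewrite -Es Es' inordK.
Qed.

Lemma round_reveal i (w : V) (L : ilog V) : val w = i.+1 ->
  produces starE 1 lamS [set ((c, inord i) : V * 'I_n.+2)] L ->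
  L w = Some (c, i.+1).
Proof.
move=> wi P.
have lti : i < n.+2 by have := ltn_ord w; rewrite wi; lia.
have wc : w != c by apply/eqP => E; move: wi; rewrite E.
have noleaf : forall v, v != c -> ~ infectious 1 L v v.
  move=> v vc /inf1 [x [t0 [Lv vt]]].
  have := P v; rewrite Lv => [[C _]].
  case: C => [[_ /seeds1 H]|[xv [evx [lx _]]]].
    by have [vc' _] := H lti; rewrite vc' eqxx in vc.
  case/starE_cases: evx => [[vc' _]|[xc _]]; first by rewrite vc' eqxx in vc.
  by move: lx; rewrite lamS2 xc /c /= maxn0; lia.
have [x Lc] : exists x, L c = Some (x, i).
  have := P c; case E: (L c) => [[x t]|].
    move=> [C _]; exists x; congr Some; congr pair.
    case: C => [[_ /seeds1 H]|[xv [evx [lx inf]]]]; first by have [_ ->] := H lti.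
    case/starE_cases: evx => [[_ xc]|[xc cx]]; last by rewrite eqxx in cx.
    exfalso; apply: (noleaf x xc).
    by move: lx inf; rewrite lamS2 /c /= max0n => ->.
  move=> N; exfalso; apply: (N i); left; exists (inord i); split.
    by rewrite in_set1.
  by rewrite inordK.
have := P w; case E: (L w) => [[y t]|].
  move=> [C _].
  case: C => [[_ /seeds1 H]|[yv [ewy [ly inf]]]].
    by have [wc' _] := H lti; rewrite wc' eqxx in wc.
  case/starE_cases: ewy => [[wc' _]|[yc _]]; first by rewrite wc' eqxx in wc.
  by move: ly; rewrite lamS2 yc /c /= maxn0 wi => <-.
move=> N; exfalso; apply: (N i.+1); right; exists c; split.
  by rewrite /starE eqxx (negbTE wc).
split; first by rewrite lamS2 /c /= maxn0 wi.
by exists x, i; split => //; rewrite ltnSn addn1 leqnn.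
Qed.

Definition Gs : tgraph := @TGraph V starE n.+1 1 lamS.

Lemma edgesP (A : {set V}) : A \in edges starE ->
  exists2 w : V, w != c & A = [set c; w].
Proof.
rewrite inE => /existsP [u /existsP [v /andP [euv /eqP ->]]].
case/starE_cases: euv => [[-> vc]|[-> uc]]; first by exists v.
by exists u => //; rewrite set2C.
Qed.

Lemma edge_in (w : V) : w != c -> [set c; w] \in edges starE.
Proof.
move=> wc; rewrite inE; apply/existsP; exists c; apply/existsP; exists w.
by rewrite /starE eqxx (negbTE wc) eqxx.
Qed.

Lemma Gs_valid : valid_tgraph Gs.
Proof.
split; first exact: starE_sym.
split; first exact: starE_irr.
split => //.
move=> A /edgesP [w wc ->].
have := @lamS_edge c w; rewrite /starE eqxx (negbTE wc) /= => /(_ isT).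
move=> /andP [-> /= H]; exact: leqW.
Qed.

End Star.
End Star.
Import Star.
Module Star2.
Section S2.
Variable n : nat.
Local Notation V := (V n).
Local Notation c := (c n).

Definition sched0 : seq {set V * 'I_n.+2} := mkseq (fun i => [set ((c, inord i) : V * 'I_n.+2)]) n.

Lemma lamS_leaf (w : V) : lamS [set w; c] = w.
Proof. by rewrite lamS2 /c /= maxn0. Qed.

Lemma sched0_wit k : 0 < k -> witnessing (Gs n) k sched0.
Proof.
move=> k0; split.
  by move=> S /mapP [i _ ->]; rewrite cards1.
move=> logs sz P lam' _ P' A /edgesP [w wc ->].
rewrite set2C.
have wpos := leaf_pos wc.
have wn : w <= n by rewrite -ltnS ltn_ord.
have szs : size sched0 = n by rewrite size_mkseq.
have ilt : (nat_of_ord w).-1 < size sched0 by rewrite szs; lia.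
have Hn : nth set0 sched0 (nat_of_ord w).-1 = [set ((c, inord (nat_of_ord w).-1) : V * 'I_n.+2)].
  by rewrite nth_mkseq //; move: ilt; rewrite szs.
have Lw := @round_reveal n (nat_of_ord w).-1 w (nth (fun _ => None) logs (nat_of_ord w).-1)
  (esym (prednK wpos)).
have := P _ ilt; rewrite Hn => /Lw Lw'.
have := P' _ ilt w; rewrite Hn Lw' => [[C _]].
case: C => [[cw _]|[_ [_ [H _]]]].
  by rewrite cw eqxx in wc.
by rewrite H /= lamS2 /Star.c /= maxn0 prednK.
Qed.

Lemma card_edges : #|edges (starE (n:=n))| = n.
Proof.
have -> : edges (starE (n:=n)) = [set [set c; w] | w in [set w : V | w != c]].
  apply/setP => A; apply/idP/imsetP.
    by move/edgesP => [w wc ->]; exists w => //; rewrite inE.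
  by move=> [w]; rewrite inE => wc ->; apply: edge_in.
rewrite card_in_imset.
  rewrite cardsE.
  have -> : #|[pred w : V | w != c]| = #|V|.-1 by rewrite -(cardC1 c).
  by rewrite card_ord.
move=> v w; rewrite !inE => vc wc E.
have : v \in [set c; w] by rewrite -E set22.
by rewrite in_set2 (negbTE vc) /= => /eqP.
Qed.


Lemma size_flat_le (f : nat -> seq nat) (s : seq nat) :
  (forall i, size (f i) <= 2) -> size (flatten [seq f i | i <- s]) <= 2 * size s.
Proof.
move=> H; elim: s => [//|a s IH] /=.
rewrite size_cat; have := H a; lia.
Qed.

Lemma avoid (s : seq nat) a b : size s < b -> exists j, j \in iota a b /\ j \notin s.
Proof.
move=> sb.
case: (boolP (all (fun j => j \in s) (iota a b))) => [/allP H|/allPn [j jin jn]].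
  by have := uniq_leq_size (iota_uniq a b) H; rewrite size_iota leqNgt sb.
by exists j.
Qed.

Lemma pair_cases (u x a b : V) : [set u; x] = [set a; b] -> x <> u ->
  (u = a /\ x = b) \/ (u = b /\ x = a).
Proof.
move=> E xu.
have : u \in [set a; b] by rewrite -E set21.
have : x \in [set a; b] by rewrite -E set22.
rewrite !in_set2 => /orP [] /eqP Ex /orP [] /eqP Eu; subst x u;
  try by [left | right | exfalso; apply: xu].
Qed.

Lemma lower k sched : witnessing (Gs n) k sched -> n <= 2 * size sched.
Proof.
move=> [_ W]; rewrite leqNgt; apply/negP => small.
set m := size sched in small.
pose logs := [seq @LL V (starE (n:=n)) n.+1 1 (lamS (n:=n)) Sd | Sd <- sched].
pose Ln i := nth (fun=> None) logs i.
have Lprod : forall i, i < m ->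
    produces (starE (n:=n)) 1 (lamS (n:=n)) (nth set0 sched i) (Ln i).
  move=> i im; rewrite /Ln /logs (nth_map set0) //.
  apply: sim_produces; first exact: starE_irr.
  by move=> u v /lamS_edge /andP [_ H]; apply: leqW.
pose badJ := flatten [seq (if Ln i c is Some (x, t0) then [:: t0.+1; val x] else [::])
                      | i <- iota 0 m].
have [j [jin jnot]] : exists j, j \in iota 1 n /\ j \notin badJ.
  apply: avoid.
  rewrite /badJ; apply: leq_ltn_trans; first apply: size_flat_le.
    by move=> i; case: (Ln i c) => [[x t0]|].
  by rewrite size_iota.
have [j1 jn] : 1 <= j /\ j <= n by move: jin; rewrite mem_iota; lia.
pose w : V := inord j.
have wj : nat_of_ord w = j by rewrite inordK.
have wc : w != c by apply/eqP => E; move: wj; rewrite E /Star.c /=; lia.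
pose badT := j :: flatten [seq (if Ln i c is Some (_, t0) then [:: t0.+1] else [::]) ++
                 (if Ln i w is Some (_, t0) then [:: t0.+1] else [::]) | i <- iota 0 m].
have [lt [ltin ltnot]] : exists l, l \in iota 1 n.+1 /\ l \notin badT.
  apply: avoid; rewrite /badT /=.
  have := @size_flat_le (fun i => (if Ln i c is Some (_, t0) then [:: t0.+1] else [::]) ++
                 (if Ln i w is Some (_, t0) then [:: t0.+1] else [::])) (iota 0 m).
  rewrite size_iota => H.
  have H2 := H (fun i => ltac:(by rewrite size_cat; case: (Ln i c) => [[x t0]|]; case: (Ln i w) => [[y t1]|])).
  rewrite ltnS; apply: (leq_ltn_trans H2); lia.
have [lt1 ltn'] : 1 <= lt /\ lt <= n.+1 by move: ltin; rewrite mem_iota; lia.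
pose lam' (A : {set V}) := if A == [set c; w] then lt else lamS A.
have valid' : valid_labeling (starE (n:=n)) n.+1 lam'.
  move=> A /edgesP [v vc ->]; rewrite /lam'.
  case: ifP => _; first by rewrite lt1.
  have := @lamS_edge n c v; rewrite /starE eqxx (negbTE vc) /= => /(_ isT).
  by move=> /andP [-> /= H]; apply: leqW.
have P' : forall i, i < m ->
    produces (starE (n:=n)) 1 lam' (nth set0 sched i) (Ln i).
  move=> i im; apply: (produces_transfer (Lprod i im)).
  - move=> u x t Lu xu eux lx inf; rewrite /lam'; case: ifP => [/eqP E|_] //.
    exfalso; case: (pair_cases E xu) => [[uc xw]|[uw xc]].
      subst u x; (have : j \in badJ; last by rewrite (negbTE jnot)); apply/flatten_mapP; exists i.
        by rewrite mem_iota.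
      by rewrite Lu !inE /= wj eqxx orbT.
    subst u x; move: lx; rewrite lamS2 /Star.c /= maxn0 wj => tj; subst t.
    have [y [t0 [Lc tt]]] := inf1 inf.
    (have : j \in badJ; last by rewrite (negbTE jnot)); apply/flatten_mapP; exists i.
      by rewrite mem_iota.
    by rewrite Lc !inE tt eqxx.
  - move=> u v t euv; rewrite /lam'; case: ifP => [/eqP E|_] //.
    move=> tl inf; exfalso; subst t.
    have [y [t0 [Lv tt]]] := inf1 inf.
    have : v \in [set c; w] by rewrite -E set22.
    rewrite in_set2 => /orP [] /eqP vcw; subst v; (have : lt \in badT; last by rewrite (negbTE ltnot));
      rewrite /badT inE; apply/orP; right; apply/flatten_mapP; exists i;
      try by rewrite mem_iota.
    + by rewrite mem_cat Lv inE tt eqxx.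
    + by rewrite mem_cat Lv !inE tt eqxx orbT.
have := W logs (size_map _ _) Lprod lam' valid' P' [set c; w] (edge_in wc).
rewrite /lam' eqxx /= lamS2 /Star.c /= max0n wj => E.
by move: ltnot; rewrite E inE eqxx.
Qed.

End S2.
End Star2.
Import Star2.

Lemma ex_min_prop (P : nat -> Prop) n : P n -> exists m, P m /\ forall k, P k -> m <= k.
Proof.
elim/ltn_ind: n => n IH Pn.
case: (classic (exists k, k < n /\ P k)) => [[k [kn Pk]]|H]; first exact: IH k kn Pk.
exists n; split => // k Pk; rewrite leqNgt; apply/negP => kn; apply: H; by exists k.
Qed.

Theorem mainTheorem3 :
  exists (G : nat -> tgraph),
    (forall n, valid_tgraph (G n)) /\
    (forall M, exists n, M < #|edges (tE (G n))|) /\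
    exists d, 0 < d /\
      forall k, 0 < k ->
        exists N, forall n, N <= n ->
          exists m, witness_complexity (G n) k m /\
                    #|edges (tE (G n))| <= d * m.
Proof.
exists Gs; split; first by move=> n; apply: Gs_valid.
split; first by move=> M; exists M.+1; rewrite /= card_edges.
exists 2; split => // k k0; exists 0 => n _.
have P0 : exists sched, witnessing (Gs n) k sched /\ size sched = n.
  by exists (sched0 n); split; [apply: sched0_wit | rewrite size_mkseq].
have [m [[sched [Ws Sz]] Hmin]] := @ex_min_prop (fun m => exists sched, witnessing (Gs n) k sched /\ size sched = m) n P0.
exists m; split.
  split; first by exists sched.
  by move=> s Ws'; apply: Hmin; exists s.
by rewrite /= card_edges -Sz; apply: lower Ws.
Qed.
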